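(* The map $i:\mathbb{N}^{\mathbb{N}}\to\Sigma^{\mathbb{N}\times\mathbb{N}}$, $i(\alpha)=\{(n,\alpha(n))\mid n\in\mathbb{N}\}$, is a weak intrinsic inclusion, but it is not an intrinsic inclusion.
   Context: We work constructively, in higher-order intuitionistic logic with Dependent Choice, together with three axioms. (i) Markov principle: if $\alpha\in2^{\mathbb{N}}$ is not identically zero, then $\alpha(n)=1$ for some $n$. (ii) Enumerability Axiom: there is a surjection $\mathbb{N}\to\Sigma^{\mathbb{N}}$. (iii) Stable Subspace Axiom: for every $\neg\neg$-stable $Z\subseteq\mathbb{N}$ the restriction $\Sigma^{\mathbb{N}}\to\Sigma^Z$ is surjective. $\Sigma=\{p\in\Omega\mid\exists f\in2^{\mathbb{N}}(p\Leftrightarrow\exists n\,f(n)=1)\}$. An injective map $i:X\to Y$ is an intrinsic inclusion if every $S:X\to\Sigma$ is of the form $S=T\circ i$ for some $T:Y\to\Sigma$. It is a weak intrinsic inclusion if every $S:X\to\Sigma$ extends along $i$ to a multivalued $\bar S:Y\rightrightarrows\Sigma$, i.e. $\bar S(i(x))=\{S(x)\}$ for all $x\in X$. A multivalued map is one valued in inhabited subsets. *)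

(* Defs.v *)
(* Omega = Prop.
   Equality on Omega (and hence on Sigma) is logical equivalence, and
   equality on function spaces is pointwise: we work with setoids so that
   no extensionality axiom is built into the statement. *)
From Stdlib Require Import Arith.

(** The Rosolini dominance Sigma, as a subset of Omega = Prop. *)
Record Sig : Type := mkSig {
  sprop : Prop;
  sprop_semidec : exists f : nat -> bool, sprop <-> exists n, f n = true
}.

Definition Sig_eq (p q : Sig) : Prop := sprop p <-> sprop q.

Definition baire_eq (a b : nat -> nat) : Prop := forall n, a n = b n.

Definition SigNN_eq (u v : nat * nat -> Sig) : Prop :=
  forall z, Sig_eq (u z) (v z).

Lemma eqnat_semidec (m k : nat) :
  exists f : nat -> bool, (m = k) <-> exists n, f n = true.
Proof.
  exists (fun _ => Nat.eqb m k). split.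
  - intros H. exists 0. now apply Nat.eqb_eq.
  - intros [_ H]. now apply Nat.eqb_eq.
Qed.

Definition Sig_of_eq (m k : nat) : Sig := mkSig (m = k) (eqnat_semidec m k).

Definition graph_map (alpha : nat -> nat) : nat * nat -> Sig :=
  fun z => Sig_of_eq (snd z) (alpha (fst z)).

(** Intrinsic inclusion, for maps between setoids (X, eqX), (Y, eqY).
    Maps X -> Sigma are the eqX-extensional ones. *)
Definition intrinsic_inclusion {X Y : Type}
    (eqX : X -> X -> Prop) (eqY : Y -> Y -> Prop) (i : X -> Y) : Prop :=
  (forall x x', eqY (i x) (i x') -> eqX x x') /\
  forall S : X -> Sig, (forall x x', eqX x x' -> Sig_eq (S x) (S x')) ->
    exists T : Y -> Sig,
      (forall y y', eqY y y' -> Sig_eq (T y) (T y')) /\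
      forall x, Sig_eq (S x) (T (i x)).

(** Weak intrinsic inclusion: every S extends along i to a multivalued map
    Sbar : Y => Sigma (a relation, extensional, with inhabited values) such
    that Sbar(i x) = {S x}. *)
Definition weak_intrinsic_inclusion {X Y : Type}
    (eqX : X -> X -> Prop) (eqY : Y -> Y -> Prop) (i : X -> Y) : Prop :=
  (forall x x', eqY (i x) (i x') -> eqX x x') /\
  forall S : X -> Sig, (forall x x', eqX x x' -> Sig_eq (S x) (S x')) ->
    exists Sbar : Y -> Sig -> Prop,
      (forall y y' s s', eqY y y' -> Sig_eq s s' -> Sbar y s -> Sbar y' s') /\
      (forall y, exists s, Sbar y s) /\
      forall x s, Sbar (i x) s <-> Sig_eq s (S x).

Definition DependentChoice : Prop :=
  forall (X : Type) (R : X -> X -> Prop),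
    (forall x, exists y, R x y) ->
    forall x0, exists f : nat -> X, f 0 = x0 /\ forall n, R (f n) (f (S n)).

Definition MarkovPrinciple : Prop :=
  forall alpha : nat -> bool,
    ~ (forall n, alpha n = false) -> exists n, alpha n = true.

Definition EnumerabilityAxiom : Prop :=
  exists e : nat -> (nat -> Sig),
    forall f : nat -> Sig, exists n, forall k, Sig_eq (e n k) (f k).

(** Elements of Sigma^Z are represented as functions on proofs of
    membership that do not depend on the membership proof. *)
Definition StableSubspaceAxiom : Prop :=
  forall Z : nat -> Prop, (forall n, ~ ~ Z n -> Z n) ->
    forall g : forall n, Z n -> Sig,
      (forall n (p q : Z n), Sig_eq (g n p) (g n q)) ->
      exists f : nat -> Sig, forall n (p : Z n), Sig_eq (f n) (g n p).

(* Main.v *)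
Require Import Defs.
From Stdlib Require Import Arith Lia List Bool Cantor.
Open Scope bool_scope.

Definition pr : nat * nat -> nat := Cantor.to_nat.
Definition up : nat -> nat * nat := Cantor.of_nat.
Lemma up_pr z : up (pr z) = z.
Proof. apply Cantor.cancel_of_to. Qed.

Definition semidec (P : Prop) := exists f : nat -> bool, P <-> exists n, f n = true.

Lemma semidec_iff (P Q : Prop) : (P <-> Q) -> semidec P -> semidec Q.
Proof. intros H [f Hf]. exists f. tauto. Qed.

Lemma semidec_and P Q : semidec P -> semidec Q -> semidec (P /\ Q).
Proof.
  intros [f Hf] [g Hg]. exists (fun n => f (fst (up n)) && g (snd (up n))).
  split.
  - intros [HP HQ]. apply Hf in HP as [a Ha]. apply Hg in HQ as [b Hb].
    exists (pr (a, b)). rewrite up_pr. simpl. now rewrite Ha, Hb.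
  - intros [n Hn]. apply andb_prop in Hn as [H1 H2]. split.
    + apply Hf. eauto. + apply Hg. eauto.
Qed.

Lemma semidec_or P Q : semidec P -> semidec Q -> semidec (P \/ Q).
Proof.
  intros [f Hf] [g Hg]. exists (fun n => f n || g n). split.
  - intros [HP|HQ].
    + apply Hf in HP as [a Ha]. exists a. now rewrite Ha.
    + apply Hg in HQ as [a Ha]. exists a. rewrite Ha. apply Bool.orb_true_r.
  - intros [n Hn]. apply Bool.orb_true_iff in Hn as [H|H].
    + left. apply Hf. eauto. + right. apply Hg. eauto.
Qed.

Lemma semidec_dec (b : bool) : semidec (b = true).
Proof. exists (fun _ => b). split. intros H; exists 0; auto. intros [_ H]; auto. Qed.

Lemma semidec_True : semidec True.
Proof. exists (fun _ => true). split; intros; eauto. exists 0; auto. Qed.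

Definition Sig_andb (s : Sig) (b : bool) : Sig :=
  mkSig (sprop s /\ b = true) (semidec_and _ _ (sprop_semidec s) (semidec_dec b)).
Definition Sig_and (s t : Sig) : Sig :=
  mkSig (sprop s /\ sprop t) (semidec_and _ _ (sprop_semidec s) (sprop_semidec t)).
Definition Sig_or (s t : Sig) : Sig :=
  mkSig (sprop s \/ sprop t) (semidec_or _ _ (sprop_semidec s) (sprop_semidec t)).

Lemma CC (DC : DependentChoice) (A : Type) (P : nat -> A -> Prop) :
  (forall n, exists a, P n a) -> exists F : nat -> A, forall n, P n (F n).
Proof.
  intros H. destruct (H 0) as [a0 _].
  destruct (DC (nat * A)%type (fun x y => fst y = S (fst x) /\ P (fst x) (snd y)))
    with (x0 := (0, a0)) as [f [f0 fS]].
  - intros [n a]. destruct (H n) as [b Hb]. exists (S n, b). simpl; auto.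
  - assert (Hf : forall n, fst (f n) = n).
    { induction n. rewrite f0; reflexivity. destruct (fS n) as [E _]. rewrite E, IHn. reflexivity. }
    exists (fun n => snd (f (S n))). intros n. destruct (fS n) as [_ Hp]. rewrite Hf in Hp. exact Hp.
Qed.

Lemma minimize_upto (h : nat -> bool) n :
  (exists p, p < n /\ h p = true /\ forall q, q < p -> h q = false) \/
  (forall q, q < n -> h q = false).
Proof.
  induction n as [|n IH].
  - right. intros; lia.
  - destruct IH as [[p Hp]|IH].
    + left. exists p. intuition lia.
    + destruct (h n) eqn:Hn.
      * left. exists n. auto.
      * right. intros q Hq. destruct (Nat.eq_dec q n). subst; auto. apply IH; lia.
Qed.

Lemma minimize (h : nat -> bool) k : h k = true ->
  exists p, h p = true /\ forall q, q < p -> h q = false.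
Proof.
  intros Hk. destruct (minimize_upto h (S k)) as [[p Hp]|H].
  - exists p; tauto.
  - rewrite H in Hk by lia. discriminate.
Qed.

Lemma fa_iff (h : nat -> bool) m :
  forallb (fun k => negb (h k)) (seq 0 m) = true <-> forall k, k < m -> h k = false.
Proof.
  rewrite forallb_forall. split.
  - intros H k Hk. specialize (H k). rewrite in_seq in H.
    destruct (h k); auto. simpl in H. symmetry; apply H; lia.
  - intros H k Hk. rewrite in_seq in Hk. rewrite H by lia. reflexivity.
Qed.

Lemma MP_seq (DC : DependentChoice) (MP : MarkovPrinciple) (P : nat -> Sig) :
  ~ ~ (exists n, sprop (P n)) -> exists n, sprop (P n).
Proof.
  intros NN.
  destruct (CC DC (nat -> bool) (fun n f => sprop (P n) <-> exists k, f k = true)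
              (fun n => sprop_semidec (P n))) as [F HF].
  destruct (MP (fun q => F (fst (up q)) (snd (up q)))) as [q Hq].
  - intros Hall. apply NN. intros [n Hn]. apply HF in Hn. destruct Hn as [k Hk].
    specialize (Hall (pr (n,k))). rewrite up_pr in Hall. simpl in Hall. congruence.
  - exists (fst (up q)). apply HF. exists (snd (up q)). exact Hq.
Qed.

Lemma MP_one (DC : DependentChoice) (MP : MarkovPrinciple) (p : Sig) : ~ ~ sprop p -> sprop p.
Proof.
  intros H. destruct (MP_seq DC MP (fun _ => p)) as [_ Hp]; auto.
  intros N. apply H. intros Hp. apply N. exists 0. exact Hp.
Qed.

Lemma diag (e : nat -> nat -> Sig)
  (He : forall f : nat -> Sig, exists n, forall k, Sig_eq (e n k) (f k))
  (g : nat -> Sig) : ~ (forall n, sprop (g n) <-> ~ sprop (e n n)).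
Proof.
  intros H. destruct (He g) as [k Hk]. specialize (H k). specialize (Hk k).
  unfold Sig_eq in Hk. tauto.
Qed.

Definition Text (T : (nat * nat -> Sig) -> Sig) :=
  forall y y', SigNN_eq y y' -> Sig_eq (T y) (T y').

Lemma T_mono (DC : DependentChoice) (MP : MarkovPrinciple) (e : nat -> nat -> Sig) (He : forall f : nat -> Sig, exists n, forall k, Sig_eq (e n k) (f k)) T (HT : Text T) (y y' : nat * nat -> Sig) :
  (forall z, sprop (y z) -> sprop (y' z)) -> sprop (T y) -> sprop (T y').
Proof.
  intros Hsub Ty. apply (MP_one DC MP). intros NT.
  apply (diag e He (fun n => T (fun z => Sig_or (y z) (Sig_and (y' z) (e n n))))).
  intros n. split.
  - intros HD HK. apply NT.
    refine (proj1 (HT _ _ _) HD). intros z. unfold Sig_eq, Sig_or, Sig_and; cbn [sprop].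
    specialize (Hsub z). tauto.
  - intros HnK. refine (proj2 (HT _ _ _) Ty). intros z. unfold Sig_eq; simpl. tauto.
Qed.

Definition restr (y : nat * nat -> Sig) (N : nat) : nat * nat -> Sig :=
  fun z => Sig_andb (y z) (fst z <? N).

Lemma T_cont (DC : DependentChoice) (MP : MarkovPrinciple) (e : nat -> nat -> Sig) (He : forall f : nat -> Sig, exists n, forall k, Sig_eq (e n k) (f k)) T (HT : Text T) (y : nat * nat -> Sig) :
  sprop (T y) -> exists N, sprop (T (restr y N)).
Proof.
  intros Ty. apply (MP_seq DC MP (fun N => T (restr y N))). intros H.
  destruct (CC DC (nat -> bool) (fun n G => sprop (e n n) <-> exists k, G k = true)
              (fun n => sprop_semidec (e n n))) as [G HG].
  apply (diag e He (fun n => T (fun z => Sig_andb (y z)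
            (forallb (fun k => negb (G n k)) (seq 0 (S (fst z))))))).
  intros n; split.
  - intros HC HK. apply HG in HK. destruct HK as [k Hk].
    destruct (minimize (G n) k Hk) as [k0 [Hk0 Hmin]].
    apply H. exists k0. refine (proj1 (HT _ _ _) HC).
    intros z. unfold Sig_eq, restr, Sig_andb; cbn [sprop]. rewrite (fa_iff (G n)), Nat.ltb_lt. split.
    + intros [Hy Hf]. split; auto. destruct (Nat.lt_ge_cases (fst z) k0); auto.
      rewrite Hf in Hk0 by lia. discriminate.
    + intros [Hy Hl]. split; auto. intros k1 Hk1. apply Hmin. lia.
  - intros HnK. refine (proj2 (HT _ _ _) Ty). intros z. unfold Sig_eq, Sig_andb; cbn [sprop].
    rewrite (fa_iff (G n)). split; [tauto|]. intros Hy; split; auto.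
    intros k _. destruct (G n k) eqn:E; auto. exfalso; apply HnK, HG; eauto.
Qed.

Definition hit (E : nat -> nat -> nat -> bool) j y p := E j (pr (y, fst (up p))) (snd (up p)).
Definition firsthit E j y p := hit E j y p && forallb (fun p' => negb (hit E j y p')) (seq 0 p).
Definition Phi E j y m := exists p, firsthit E j y p = true /\ fst (up p) = m.

Lemma Phi_fun E j y m m' : Phi E j y m -> Phi E j y m' -> m = m'.
Proof.
  intros [p [Hp Ep]] [p' [Hp' Ep']]. unfold firsthit in *.
  apply andb_prop in Hp as [H1 H2]. apply andb_prop in Hp' as [H1' H2'].
  rewrite fa_iff in H2, H2'.
  destruct (lt_eq_lt_dec p p') as [[Hl|Hl]|Hl].
  - rewrite H2' in H1 by exact Hl. discriminate.
  - subst; reflexivity.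
  - rewrite H2 in H1' by exact Hl. discriminate.
Qed.

Definition FS E (b : nat -> nat) : Prop :=
  forall x, b x <> 0 -> (forall y, y < x -> b y = 0) -> exists j, j < x /\ Phi E j x (b x).

Lemma FS_semidec (e : nat -> nat -> Sig)
  (He : forall f : nat -> Sig, exists n, forall k, Sig_eq (e n k) (f k))
  E (HE : forall j q, sprop (e j q) <-> exists k, E j q k = true) b : semidec (FS E b).
Proof.
  destruct (He (fun q => graph_map b (up q))) as [i Hi].
  assert (Hidx : forall x, Phi E i x (b x)).
  { intros x. assert (Hx : sprop (e i (pr (x, b x)))).
    { apply Hi. unfold graph_map. rewrite up_pr. simpl. reflexivity. }
    apply HE in Hx as [k Hk].
    destruct (minimize (hit E i x) (pr (b x, k))) as [p0 [Hp0 Hmin]].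
    { unfold hit. rewrite up_pr. exact Hk. }
    exists p0. split.
    - unfold firsthit. rewrite Hp0. simpl. apply fa_iff. exact Hmin.
    - unfold hit in Hp0. assert (Hs : sprop (e i (pr (x, fst (up p0))))) by (apply HE; eauto).
      apply Hi in Hs. unfold graph_map in Hs. rewrite up_pr in Hs. exact Hs. }
  destruct (minimize_upto (fun x => negb (b x =? 0)) (S i)) as [[x0 [Hx0 [Hb Hm]]]|Hall].
  - apply semidec_iff with (P := exists j, j < x0 /\ Phi E j x0 (b x0)).
    + assert (Hb0 : b x0 <> 0) by (intros C; rewrite C in Hb; discriminate).
      assert (Hm0 : forall y, y < x0 -> b y = 0).
      { intros y Hy. specialize (Hm y Hy). destruct (b y); auto. discriminate. }
      split.
      * intros H x Hbx Hlt. assert (x = x0).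
        { destruct (lt_eq_lt_dec x x0) as [[l|l]|l]; auto.
          - exfalso; apply Hbx; auto. - exfalso; apply Hb0; auto. }
        subst; exact H.
      * intros H. apply H; auto.
    + exists (fun q => let (j, p) := up q in (j <? x0) && firsthit E j x0 p && (fst (up p) =? b x0)).
      split.
      * intros [j [Hj [p [Hp Ep]]]]. exists (pr (j, p)). rewrite up_pr.
        rewrite Hp, Ep, Nat.eqb_refl. apply Nat.ltb_lt in Hj. rewrite Hj. reflexivity.
      * intros [q Hq]. destruct (up q) as [j p]. apply andb_prop in Hq as [Hq H3].
        apply andb_prop in Hq as [H1 H2]. exists j. split. apply Nat.ltb_lt; auto.
        exists p. split; auto. apply Nat.eqb_eq; auto.
  - apply semidec_iff with (P := True); [|exact semidec_True]. split; auto.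
    intros _ x Hbx _. exists i. split; auto.
    destruct (Nat.lt_ge_cases i x); auto. exfalso. specialize (Hall x ltac:(lia)).
    destruct (b x); auto. discriminate.
Qed.

Lemma FS_ext E b b' : baire_eq b b' -> FS E b -> FS E b'.
Proof.
  intros H F x Hx Hl. rewrite <- (H x) in Hx |- *. destruct (F x Hx) as [j Hj].
  - intros y Hy. rewrite H. auto.
  - exists j. exact Hj.
Qed.

Lemma pigeon N : forall (R : nat -> nat -> Prop),
  (forall c, c <= N -> exists j, j < N /\ R c j) ->
  (forall c c' j, c <= N -> c' <= N -> R c j -> R c' j -> c = c') -> False.
Proof.
  induction N as [|N IH]; intros R Hex Hinj.
  - destruct (Hex 0 (le_n 0)) as [j [Hj _]]. lia.
  - destruct (Hex (S N) (le_n _)) as [t [Ht Rt]].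
    set (sw := fun e => if e =? t then N else if e =? N then t else e).
    apply (IH (fun c e => R c (sw e))).
    + intros c Hc. destruct (Hex c ltac:(lia)) as [j [Hj Rj]].
      assert (j <> t) by (intros ->; assert (c = S N) by (apply (Hinj c (S N) t); auto; lia); lia).
      exists (sw j). unfold sw. split.
      * destruct (Nat.eqb_spec j t); [lia|]. destruct (Nat.eqb_spec j N); lia.
      * destruct (Nat.eqb_spec j t); [lia|]. destruct (Nat.eqb_spec j N).
        -- rewrite Nat.eqb_refl. subst; auto.
        -- destruct (Nat.eqb_spec j t); [lia|]. destruct (Nat.eqb_spec j N); [lia|]. auto.
    + intros c c' j Hc Hc' H1 H2. eapply Hinj; eauto; lia.
Qed.

Lemma graph_inj a b : SigNN_eq (graph_map a) (graph_map b) -> baire_eq a b.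
Proof.
  intros H n. specialize (H (n, a n)). unfold Sig_eq, graph_map in H. simpl in H.
  apply H. reflexivity.
Qed.

Lemma EA2 (e : nat -> nat -> Sig)
  (He : forall f : nat -> Sig, exists n, forall k, Sig_eq (e n k) (f k))
  (f2 : nat * nat -> Sig) : exists k, SigNN_eq (fun z => e k (pr z)) f2.
Proof.
  destruct (He (fun q => f2 (up q))) as [k Hk]. exists k. intros z.
  specialize (Hk (pr z)). rewrite up_pr in Hk. exact Hk.
Qed.

Theorem proposition4p4 :
  DependentChoice -> MarkovPrinciple -> EnumerabilityAxiom ->
  StableSubspaceAxiom ->
  weak_intrinsic_inclusion baire_eq SigNN_eq graph_map /\
  ~ intrinsic_inclusion baire_eq SigNN_eq graph_map.
Proof.
  intros DC MP [e He] SSA. split.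
  - split; [exact graph_inj|]. intros S Sext.
    set (e2 := fun k (z : nat * nat) => e k (pr z)).
    set (Z := fun k => forall n, (exists m, sprop (e2 k (n, m))) /\
               (forall m m', sprop (e2 k (n, m)) -> sprop (e2 k (n, m')) -> m = m')).
    assert (Zst : forall k, ~ ~ Z k -> Z k).
    { intros k NN n. split.
      - apply (MP_seq DC MP (fun m => e2 k (n, m))). intros Hn. apply NN. intros HZ.
        apply Hn. exact (proj1 (HZ n)).
      - intros m m' H1 H2. destruct (Nat.eq_dec m m') as [|Hne]; auto. exfalso.
        apply NN. intros HZ. apply Hne. exact (proj2 (HZ n) m m' H1 H2). }
    assert (Gsd : forall k, Z k -> semidec (exists x, SigNN_eq (e2 k) (graph_map x) /\ sprop (S x))).
    { intros k p. destruct (CC DC nat (fun n m => sprop (e2 k (n, m))) (fun n => proj1 (p n)))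
        as [x Hx].
      assert (Hg : SigNN_eq (e2 k) (graph_map x)).
      { intros [n m]. unfold Sig_eq, graph_map; simpl. split.
        - intros H. symmetry. exact (proj2 (p n) _ _ (Hx n) H).
        - intros ->. exact (Hx n). }
      apply semidec_iff with (P := sprop (S x)); [|exact (sprop_semidec (S x))].
      split.
      + intros H. exists x. auto.
      + intros [x' [H1 H2]]. refine (proj1 (Sext x' x _) H2).
        apply graph_inj. intros z. specialize (H1 z). specialize (Hg z). unfold Sig_eq in *. tauto. }
    destruct (SSA Z Zst (fun k p => mkSig _ (Gsd k p))) as [f Hf].
    { intros n p q. unfold Sig_eq. simpl. tauto. }
    exists (fun y s => exists k, SigNN_eq (e2 k) y /\ Sig_eq s (f k)).
    split; [|split].
    + intros y y' s s' Hy Hs [k [Hk Hsk]]. exists k. split.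
      * intros z. specialize (Hk z). specialize (Hy z). unfold Sig_eq in *. tauto.
      * unfold Sig_eq in *. tauto.
    + intros y. destruct (EA2 e He y) as [k Hk]. exists (f k), k. split; auto.
      unfold Sig_eq; tauto.
    + intros x s. split.
      * intros [k [Hk Hsk]].
        assert (p : Z k).
        { intros n. split.
          - exists (x n). apply Hk. unfold graph_map; simpl. reflexivity.
          - intros m m' H1 H2. apply Hk in H1. apply Hk in H2. simpl in *. congruence. }
        specialize (Hf k p). unfold Sig_eq in *. simpl in Hf. rewrite Hsk, Hf. split.
        -- intros [x' [H1 H2]]. refine (proj1 (Sext x' x _) H2).
           apply graph_inj. intros z. specialize (H1 z). specialize (Hk z). unfold Sig_eq in *. tauto.
        -- intros H. exists x. split; auto.
      * intros Hs. destruct (EA2 e He (graph_map x)) as [k Hk]. exists k. split; auto.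
        assert (p : Z k).
        { intros n. split.
          - exists (x n). apply Hk. unfold graph_map; simpl. reflexivity.
          - intros m m' H1 H2. apply Hk in H1. apply Hk in H2. simpl in *. congruence. }
        specialize (Hf k p). unfold Sig_eq in *. simpl in Hf. rewrite Hs, Hf. split.
        -- intros H. exists x. split; auto.
        -- intros [x' [H1 H2]]. refine (proj1 (Sext x' x _) H2).
           apply graph_inj. intros z. specialize (H1 z). specialize (Hk z). unfold Sig_eq in *. tauto.
  - intros [_ Hext].
    destruct (CC DC (nat -> bool) (fun n f => sprop (e (fst (up n)) (snd (up n))) <-> exists k, f k = true)
                (fun n => sprop_semidec _)) as [F HF].
    set (E := fun j q k => F (pr (j, q)) k).
    assert (HE : forall j q, sprop (e j q) <-> exists k, E j q k = true).
    { intros j q. unfold E. rewrite <- HF. rewrite up_pr. reflexivity. }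
    set (SS := fun b => mkSig (FS E b) (FS_semidec e He E HE b)).
    destruct (Hext SS) as [T [HT HST]].
    { intros b b' H. unfold Sig_eq; simpl. split; apply FS_ext; auto. intros n; auto. }
    assert (T0 : sprop (T (graph_map (fun _ => 0)))).
    { apply HST. simpl. intros x Hx. exfalso. auto. }
    destruct (T_cont DC MP e He T HT _ T0) as [N HN].
    apply (pigeon N (fun c j => Phi E j N (Datatypes.S c))).
    + intros c Hc.
      set (bc := fun y => if y =? N then Datatypes.S c else 0).
      assert (Tb : sprop (T (graph_map bc))).
      { apply (T_mono DC MP e He T HT _ _) with (2 := HN).
        intros [j m]. unfold restr, Sig_andb, graph_map; simpl. intros [Hm Hj].
        apply Nat.ltb_lt in Hj. unfold bc. destruct (Nat.eqb_spec j N); [lia|]. exact Hm. }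
      apply HST in Tb. simpl in Tb. specialize (Tb N).
      unfold bc in Tb. rewrite Nat.eqb_refl in Tb. apply Tb; [discriminate|].
      intros y Hy. destruct (Nat.eqb_spec y N); [lia|]. reflexivity.
    + intros c c' j _ _ H1 H2. pose proof (Phi_fun _ _ _ _ _ H1 H2). congruence.
Qed.
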